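(* Let $p\ge K\ge 2$ and $n\ge K$. Let $A=[A_1,\dots,A_K]\in\mathbb{R}^{p\times K}$ have nonnegative entries with each column summing to $1$, and let $W\in\mathbb{R}^{K\times n}$ have nonnegative entries with each column summing to $1$. Set $D_0=AW$ and assume $\mathrm{rank}(D_0)=K$, with the $K$ nonzero singular values of $D_0$ distinct. Let $a_i^T$ denote the $i$-th row of $A$ and assume every $a_i\neq 0$. Let $\xi_1,\dots,\xi_K$ be the left singular vectors of $D_0$ associated with its $K$ nonzero singular values, in decreasing order of the singular values, and let $\Xi=[\xi_1,\dots,\xi_K]$. Let $V=[V_1,\dots,V_K]\in\mathbb{R}^{K\times K}$ be the matrix with $\Xi=AV$. Assume that all entries of $\xi_1$ and of $V_1$ are positive. Define $R\in\mathbb{R}^{p\times(K-1)}$ by $R(i,k)=\xi_{k+1}(i)/\xi_1(i)$ and $V^*\in\mathbb{R}^{K\times(K-1)}$ by $V^*(j,k)=V_{k+1}(j)/V_1(j)$, for $1\le i\le p$, $1\le j\le K$, $1\le k\le K-1$. Let $r_1,\dots,r_p\in\mathbb{R}^{K-1}$ be the rows of $R$, let $v_1^*,\dots,v_K^*\in\mathbb{R}^{K-1}$ be the rows of $V^*$, and let $\Pi=[\mathrm{diag}(\xi_1)]^{-1}A\,\mathrm{diag}(V_1)\in\mathbb{R}^{p\times K}$ with rows $\pi_1,\dots,\pi_p$. Then: (i) $v_1^*,\dots,v_K^*$ are affinely independent, so they are the vertices of a non-degenerate simplex $\mathcal{S}_K^*\subset\mathbb{R}^{K-1}$; (ii) for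 every $1\le i\le p$, $\pi_i$ is a weight vector (nonnegative entries summing to $1$), with $\pi_i(j)>0$ if and only if $a_i(j)>0$, and $r_i=\sum_{j=1}^K\pi_i(j)v_j^*$; in particular, $r_i$ lies in $\mathcal{S}_K^*$, in the relative interior of the face of $\mathcal{S}_K^*$ spanned by $\{v_j^*: a_i(j)>0\}$; (iii) for every $1\le i\le p$ and $1\le k\le K$, $r_i=v_k^*$ if and only if word $i$ is an anchor word of topic $k$, i.e. $a_i(j)=0$ for all $j\ne k$.
   Context: This is the noiseless topic model (pLSI): column $k$ of $A$ is the word distribution of topic $k$ over a vocabulary of $p$ words, and column $j$ of $W$ is the topic mixing proportion of document $j$. Word $i$ is called an anchor word of topic $k$ if $A(i,k)\ne 0$ and $A(i,\ell)=0$ for all $\ell\ne k$. A weight vector is a vector with nonnegative entries summing to $1$. Since $\mathrm{rank}(D_0)=K$, the column span of $\Xi$ equals that of $A$, so the $K\times K$ matrix $V$ with $\Xi=AV$ exists, is unique and is nonsingular. *)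

(* Defs.v *)
From HB Require Import structures.
From mathcomp Require Import all_boot all_order all_algebra.
From mathcomp Require Import reals.
Set Implicit Arguments. Unset Strict Implicit. Unset Printing Implicit Defensive.
Import Order.TTheory GRing.Theory Num.Theory.
Local Open Scope ring_scope.

Section Defs.
Variable R : realType.

Definition col_stochastic (m q : nat) (M : 'M[R]_(m, q)) : Prop :=
  (forall i j, 0 <= M i j) /\ (forall j, \sum_i M i j = 1).

Definition weight_vector (m : nat) (x : 'rV[R]_m) : Prop :=
  (forall j, 0 <= x 0 j) /\ \sum_j x 0 j = 1.

(* Xi (p x K) is the matrix whose columns are left singular vectors of D
   associated with K nonzero singular values s 0 > s 1 > ... > s (K-1) > 0,
   i.e. there are right singular vectors H (orthonormal columns, too) with
   D eta_k = s_k xi_k and D^T xi_k = s_k eta_k. *)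
Definition left_singular_vectors (p n K : nat) (D : 'M[R]_(p, n))
    (Xi : 'M[R]_(p, K)) (s : 'I_K -> R) : Prop :=
  exists H : 'M[R]_(n, K),
    [/\ Xi^T *m Xi = 1%:M /\ H^T *m H = 1%:M,
        (forall k, D *m col k H = s k *: col k Xi),
        (forall k, D^T *m col k Xi = s k *: col k H),
        (forall k1 k2 : 'I_K, (k1 < k2)%N -> s k2 < s k1) &
        (forall k, 0 < s k)].

Definition affinely_independent (m d : nat) (v : 'I_m -> 'rV[R]_d) : Prop :=
  forall c : 'I_m -> R, \sum_j c j = 0 -> \sum_j c j *: v j = 0 ->
    forall j, c j = 0.

Definition in_simplex (m d : nat) (v : 'I_m -> 'rV[R]_d) (x : 'rV[R]_d) :=
  exists w : 'I_m -> R, (forall j, 0 <= w j) /\ \sum_j w j = 1 /\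
    x = \sum_j w j *: v j.

(* x lies in the relative interior of the face spanned by {v j | S j}
   (v affinely independent): a convex combination with positive weights
   exactly on S. *)
Definition in_relint_face (m d : nat) (v : 'I_m -> 'rV[R]_d) (S : pred 'I_m)
    (x : 'rV[R]_d) :=
  exists w : 'I_m -> R, (forall j, S j -> 0 < w j) /\
    (forall j, ~~ S j -> w j = 0) /\ \sum_j w j = 1 /\
    x = \sum_j w j *: v j.

Definition anchor_word (p K : nat) (A : 'M[R]_(p, K)) (i : 'I_p) (k : 'I_K) :=
  A i k != 0 /\ forall l, l != k -> A i l = 0.

End Defs.

(* Main.v *)
Require Import Defs.
From HB Require Import structures.
From mathcomp Require Import all_boot all_order all_algebra.
From mathcomp Require Import reals.
From mathcomp Require Import ring.
Import Order.TTheory GRing.Theory Num.Theory.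
Local Open Scope ring_scope.

Theorem lemma2 (R : realType) (p n k : nat)
  (A : 'M[R]_(p, k.+1)) (W : 'M[R]_(k.+1, n))
  (Xi : 'M[R]_(p, k.+1)) (s : 'I_k.+1 -> R) (V : 'M[R]_(k.+1, k.+1)) :
  (1 <= k)%N -> (k.+1 <= p)%N -> (k.+1 <= n)%N ->
  col_stochastic A -> col_stochastic W ->
  \rank (A *m W) = k.+1 ->
  (forall i, row i A != 0) ->
  left_singular_vectors (A *m W) Xi s ->
  Xi = A *m V ->
  (forall i, 0 < Xi i ord0) -> (forall j, 0 < V j ord0) ->
  let Rm : 'M[R]_(p, k) := \matrix_(i, l) (Xi i (lift ord0 l) / Xi i ord0) in
  let Vs : 'M[R]_(k.+1, k) := \matrix_(j, l) (V j (lift ord0 l) / V j ord0) in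
  let Pi : 'M[R]_(p, k.+1) :=
    invmx (diag_mx (col ord0 Xi)^T) *m A *m diag_mx (col ord0 V)^T in
  let vs := fun j : 'I_k.+1 => row j Vs in
  [/\ affinely_independent vs,
      (forall i : 'I_p,
        [/\ weight_vector (row i Pi),
            (forall j, (0 < Pi i j) = (0 < A i j)),
            row i Rm = \sum_j Pi i j *: vs j,
            in_simplex vs (row i Rm) &
            in_relint_face vs (fun j => 0 < A i j) (row i Rm)]) &
      (forall (i : 'I_p) (kk : 'I_k.+1), row i Rm = vs kk <-> anchor_word A i kk)].
Proof.
move=> _ _ _ [A0 _] _ _ _ [H [[XtX _] _ _ _ _]] XiE Xpos Vpos Rm Vs Pi vs.
have Vu : V \in unitmx.
  have : (Xi^T *m A) *m V = 1%:M by rewrite -mulmxA -XiE.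
  by case/mulmx1_unit.
have XiS : forall i l, Xi i l = \sum_j A i j * V j l.
  by move=> i l; rewrite XiE mxE.
set D := diag_mx (col ord0 Xi)^T.
set D' : 'M[R]_p := diag_mx (\row_i (Xi i ord0)^-1).
have D'D : D' *m D = 1%:M.
  rewrite /D /D' mulmx_diag; apply/matrixP => i j.
  by rewrite !mxE mulVf // gt_eqF.
have Du : D \in unitmx by case: (mulmx1_unit D'D).
have invD : invmx D = D'.
  by rewrite -[LHS]mul1mx -D'D -mulmxA mulmxV // mulmx1.
have PiE : forall i j, Pi i j = A i j * V j ord0 / Xi i ord0.
  move=> i j; rewrite /Pi invD /D' mul_diag_mx mul_mx_diag !mxE.
  by rewrite [RHS]mulrC mulrA.
have Haff : affinely_independent vs.
  move=> c Hc0 Hc j.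
  set d := \row_j (c j / V j ord0).
  have dV : d *m V = 0.
    apply/rowP => l; rewrite !mxE.
    case: (unliftP ord0 l) => [l'|] ->.
      transitivity ((\sum_j c j *: vs j) 0 l'); last by rewrite Hc mxE.
      rewrite summxE; apply: eq_bigr => i _.
      by rewrite !mxE mulrAC mulrA.
    rewrite -[RHS]Hc0; apply: eq_bigr => i _; rewrite mxE mulrVK //.
    by rewrite unitfE gt_eqF.
  have d0 : d = 0 by rewrite -(mulmxK Vu d) dV mul0mx.
  have := congr1 (fun M : 'rV_k.+1 => M 0 j) d0; rewrite !mxE => /eqP.
  by rewrite mulf_eq0 invr_eq0 (gt_eqF (Vpos j)) orbF => /eqP.
have HR : forall i, row i Rm = \sum_j Pi i j *: vs j.
  move=> i; apply/rowP => l; rewrite summxE !mxE XiS mulr_suml.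
  apply: eq_bigr => j _; rewrite PiE !mxE.
  field; rewrite ?gt_eqF //.
have Hsum : forall i, \sum_j Pi i j = 1.
  move=> i; under eq_bigr do rewrite PiE.
  by rewrite -mulr_suml -XiS mulfV // gt_eqF.
have Hnn : forall i j, 0 <= Pi i j.
  by move=> i j; rewrite PiE divr_ge0 ?mulr_ge0 ?A0 // ltW.
have Hpos : forall i j, (0 < Pi i j) = (0 < A i j).
  move=> i j; rewrite PiE pmulr_lgt0 ?invr_gt0 // pmulr_lgt0 //.
have Hz : forall i j, ~~ (0 < A i j) -> Pi i j = 0.
  move=> i j; rewrite lt_def (A0 i j) andbT negbK => /eqP Az.
  by rewrite PiE Az !mul0r.
split => //.
- move=> i; split => //.
  + split => [j|]; first by rewrite mxE.
    by under eq_bigr do rewrite mxE; exact: Hsum.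
  + by exists (fun j => Pi i j); split.
  + exists (fun j => Pi i j); split; first by move=> j; rewrite Hpos.
    by split => //; exact: Hz i.
- move=> i kk; split.
  + move=> Hr.
    have Hc := Haff (fun j => Pi i j - (j == kk)%:R).
    have E : forall j, Pi i j = (j == kk)%:R.
      move=> j; apply/eqP; rewrite -subr_eq0; apply/eqP; apply: Hc.
        rewrite sumrB Hsum (bigD1 kk) //= eqxx big1 ?addr0 ?subrr //.
        by move=> j0 /negPf ->.
      under eq_bigr do rewrite scalerBl.
      rewrite sumrB -HR Hr (bigD1 kk) //= eqxx scale1r big1 ?addr0 ?subrr //.
      by move=> j0 /negPf ->; rewrite scale0r.
    split.
      apply/eqP => Ak; have := E kk; rewrite eqxx PiE Ak !mul0r => /eqP.
      by rewrite eq_sym oner_eq0.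
    move=> l /negPf lk; have := E l; rewrite lk PiE => /eqP.
    rewrite mulf_eq0 invr_eq0 (gt_eqF (Xpos i)) orbF mulf_eq0.
    by rewrite (gt_eqF (Vpos l)) orbF => /eqP.
  + case=> _ Hl.
    have P0 : forall j, j != kk -> Pi i j = 0.
      by move=> j /Hl Aj; rewrite PiE Aj !mul0r.
    have P1 : Pi i kk = 1.
      by rewrite -(Hsum i) (bigD1 kk) //= big1 ?addr0.
    rewrite HR (bigD1 kk) //= P1 scale1r big1 ?addr0 //.
    by move=> j /P0 ->; rewrite scale0r.
Qed.
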